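(* Let $X$ be a paracompact $\sigma$-space, let $\{F_\alpha:\alpha\in A_i\}$ be a discrete family of closed subsets of $X$, and put $F_i=\bigcup\{F_\alpha:\alpha\in A_i\}$. If the pair $(X,F_\alpha)$ is semicanonical for every $\alpha\in A_i$, then the pair $(X,F_i)$ is semicanonical.
   Context: A $\sigma$-space is a regular $T_1$ space with a $\sigma$-discrete network. For a closed subset $A$ of $X$, the pair $(X,A)$ is semicanonical if there is an open cover $\omega$ of $X\setminus A$ such that every open neighborhood $OA$ of $A$ contains an open neighborhood $UA$ of $A$ such that every $G\in\omega$ with $G\cap UA\neq\varnothing$ satisfies $G\subseteq OA$. *)

(* Defs.v *)
From mathcomp Require Import all_boot all_order.
From mathcomp Require Import all_classical all_reals all_analysis.
Set Implicit Arguments. Unset Strict Implicit. Unset Printing Implicit Defensive.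
Local Open Scope classical_set_scope.

Section Defs.
Context {X : topologicalType}.

Definition discrete_family (I : Type) (F : I -> set X) : Prop :=
  forall x : X, exists U : set X, [/\ open U, U x &
    forall i j : I, U `&` F i !=set0 -> U `&` F j !=set0 -> i = j].

Definition discrete_collection (N : set (set X)) : Prop :=
  discrete_family (fun S : {S : set X | N S} => proj1_sig S).

Definition locally_finite_family (I : Type) (F : I -> set X) : Prop :=
  forall x : X, exists U : set X, [/\ open U, U x &
    finite_set [set i | U `&` F i !=set0]].

Definition network (N : set (set X)) : Prop :=
  forall (x : X) (U : set X), open U -> U x ->
    exists M : set X, [/\ N M, M x & M `<=` U].

Definition sigma_discrete (N : set (set X)) : Prop :=
  exists Nn : nat -> set (set X),
    (forall n, discrete_collection (Nn n)) /\ N = \bigcup_n Nn n.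

Definition sigma_space : Prop :=
  [/\ regular_space X, accessible_space X &
      exists N : set (set X), network N /\ sigma_discrete N].

Definition paracompact : Prop :=
  forall (I : Type) (G : I -> set X), (forall i, open (G i)) ->
    \bigcup_i G i = setT ->
    exists (J : Type) (V : J -> set X),
      [/\ forall j, open (V j), \bigcup_j V j = setT,
          forall j, exists i, V j `<=` G i & locally_finite_family V].

(* The pair (X, A) is semicanonical (A is assumed closed). *)
Definition semicanonical (A : set X) : Prop :=
  exists omega : set (set X),
    [/\ forall G, omega G -> open G /\ G `<=` ~` A,
        \bigcup_(G in omega) G = ~` A &
        forall OA : set X, open OA -> A `<=` OA ->
          exists UA : set X, [/\ open UA, A `<=` UA, UA `<=` OA &
            forall G, omega G -> G `&` UA !=set0 -> G `<=` OA]].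

End Defs.

(* Main.v *)
Require Import Defs.
From mathcomp Require Import all_boot all_order.
From mathcomp Require Import all_classical all_reals all_analysis.
From mathcomp Require Import finmap.
Local Open Scope classical_set_scope.

Lemma lf_closure_avoid (X : topologicalType) (J : Type) (V : J -> set X)
  (y : X) (Q : set J) :
  locally_finite_family V -> (forall j, Q j -> ~ closure (V j) y) ->
  ~ closure (\bigcup_(j in Q) V j) y.
Proof.
move=> lfV HQ cl; have [W [oW Wy finW]] := lfV y.
have finI := finite_image V finW.
have [D HD] := (finite_fsetP).1 finI.
pose f := fun A : set X => [set z | closure A y \/ ~ closure A z].
have nbf : nbhs y (\bigcap_(A in [set` D]) f A).
  apply: filter_bigI => A _.
  have [cA|ncA] := pselect (closure A y).
    by apply: filterS filterT => z _; left.
  apply: (@filterS _ _ _ (~` closure A)); first by move=> z nz; right.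
  apply: open_nbhs_nbhs; split => //; rewrite openC; exact: closed_closure.
have nbW : nbhs y W by apply: open_nbhs_nbhs.
have [z [[j Qj Vjz] [Wz Iz]]] := cl _ (filterI nbW nbf).
have : [set` D] (V j) by rewrite -HD; exists j => //; exists z.
move=> /Iz [|]; first by move: (HQ j Qj).
by apply; apply: subset_closure.
Qed.

Theorem mainTheorem11 (X : topologicalType) (Ai : Type) (F : Ai -> set X) :
  @paracompact X -> @sigma_space X ->
  (forall a, closed (F a)) -> discrete_family F ->
  (forall a, semicanonical (F a)) ->
  semicanonical (\bigcup_(a in [set: Ai]) F a).
Proof.
move=> para [reg _ _] _ disc Hsc.
have [om Hom] := choice Hsc.
pose good := fun P : set X => open P /\ forall c d, closure P `&` F c !=set0 ->
   closure P `&` F d !=set0 -> c = d.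
have cov : \bigcup_(i : {P : set X | good P}) proj1_sig i = setT.
  apply/seteqP; split => // x _.
  have [U [oU Ux HU]] := disc x.
  have := reg x U (open_nbhs_nbhs (conj oU Ux)).
  move=> [B nB cBU]; move: nB; rewrite nbhsE => -[P [oP Px] PB].
  have gP : good P.
    split => // c d Hc Hd; apply: HU.
      by case: Hc => z [/(closureS PB)/cBU Uz Fz]; exists z.
    by case: Hd => z [/(closureS PB)/cBU Uz Fz]; exists z.
  by exists (exist _ P gP).
have [J [V [oV covV refV lfV]]] := para {P : set X | good P} (fun i => proj1_sig i) (fun i => (proj2_sig i).1) cov.
have nz : forall A : set X, ~ (A !=set0) -> A = set0.
  by move=> A nA; apply/seteqP; split => // z Az; apply: nA; exists z.
have e0 : forall A : set X, A = set0 -> forall z, ~ A z by move=> A -> z.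
have dich : forall j, (forall c, closure (V j) `&` F c = set0) \/
    exists a, forall c, c <> a -> closure (V j) `&` F c = set0.
  move=> j; have [[P [_ HP]] /= VP] := refV j.
  have [[a Ha]|na] := pselect (exists a, closure (V j) `&` F a !=set0).
    right; exists a => c ca; apply: nz => Hc; apply: ca.
    apply: HP.
      by case: Hc => z [/(closureS VP) ? ?]; exists z.
    by case: Ha => z [/(closureS VP) ? ?]; exists z.
  left => c; apply: nz => Hc; apply: na; by exists c.
pose omega := [set S | (exists j, S = V j /\ forall c, closure (V j) `&` F c = set0) \/
  (exists j a G, [/\ S = G `&` V j, om a G & forall c, c <> a -> closure (V j) `&` F c = set0])].
have om1 : forall S, omega S -> open S /\ S `<=` ~` \bigcup_(a in [set: Ai]) F a.
  move=> S [[j [-> Hj]]|[j [a [G [-> oG Hj]]]]].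
    split => // z Vz [c _ Fc].
    by apply: (e0 _ (Hj c) z); split => //; apply: subset_closure.
  case: (Hom a) => Hom1 _ _; have [oG1 GF] := Hom1 G oG.
  split; first exact: openI.
  move=> z [Gz Vz] [c _ Fc].
  have [ca|ca] := pselect (c = a); first by subst c; exact: (GF z Gz).
  by apply: (e0 _ (Hj c ca) z); split => //; apply: subset_closure.
exists omega; split => //.
  apply/seteqP; split.
    by move=> z [S /om1 [_ SF] Sz]; apply: SF.
  move=> x nFx.
  have : (\bigcup_j V j) x by rewrite covV.
  move=> [j _ Vjx].
  case: (dich j) => [Hj|[a Hj]].
    by exists (V j) => //; left; exists j.
  have : (~` F a) x by move=> Fx; apply: nFx; exists a.
  case: (Hom a) => _ + _; move=> <- [G oG Gx].
  exists (G `&` V j) => //; right; exists j, a, G; split => // c ca; exact: Hj.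
move=> OA oOA FOA.
have : forall b, exists U, [/\ open U, F b `<=` U, U `<=` OA &
    forall G, om b G -> G `&` U !=set0 -> G `<=` OA].
  move=> b; case: (Hom b) => _ _; apply => //.
  by move=> z Fz; apply: FOA; exists b.
move=> /choice [Ub HUb].
pose Bad := fun b => \bigcup_(j in [set j | closure (V j) `&` F b = set0]) V j.
have notB : forall b y, F b y -> ~ closure (Bad b) y.
  move=> b y Fy; apply: lf_closure_avoid => // j /= Hj cj.
  by move/eqP: Hj; apply/negP/set0P; exists y.
exists (\bigcup_(b in [set: Ai]) (Ub b `&` ~` closure (Bad b))); split.
- apply: bigcup_open => b _; apply: openI; first by case: (HUb b).
  by rewrite openC; exact: closed_closure.
- move=> z [b _ Fz]; exists b => //; split; first by case: (HUb b) => _ + _ _; apply.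
  exact: notB.
- by move=> z [b _ [Uz _]]; case: (HUb b) => _ _ + _; apply.
move=> S oS [y [Sy [b _ [Uy nB]]]].
case: oS Sy => [[j [-> Hj]]|[j [a [G [-> oG Hj]]]]] Sy.
  by exfalso; apply: nB; apply: subset_closure; exists j => //=; exact: Hj.
have [ba|ba] := pselect (b = a).
  subst b; case: (HUb a) => _ _ _ /(_ G oG) HG.
  by move=> z [Gz _]; apply: HG => //; exists y; case: Sy.
by exfalso; apply: nB; apply: subset_closure; exists j => //=; [exact: Hj | case: Sy].
Qed.
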